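(* In the setting described in the context, assume $G$ satisfies Condition 1. Then $$\sum_{t=0}^{\infty}\alpha(t)\sum_{j=1}^{n-\phi}\pi_j(t+1)\,|y(t)-x_j(t)|<\infty.$$
   Context: A synchronous system of $n$ agents communicates over a directed graph $G=(\mathcal{V},\mathcal{E})$, $\mathcal{V}=\{1,\dots,n\}$, without self-loops; $N_i^-=\{j:(j,i)\in\mathcal{E}\}$. At most $f$ agents are Byzantine faulty (may send arbitrary, possibly inconsistent values); $\mathcal{F}$ is the set of faulty agents, $\phi=|\mathcal{F}|\le f$, non-faulty agents indexed $1,\dots,n-\phi$. Assignment matrix $\mathbf{A}\in\mathbb{R}^{k\times n}$: nonnegative entries, columns summing to $1$; agent $i$ holds $g_i=\sum_{j=1}^k\mathbf{A}_{ji}h_j$ for admissible (convex, $L$-Lipschitz, nonempty compact argmin) $h_1,\dots,h_k:\mathbb{R}\to\mathbb{R}$. Sparsity parameter $sp(\mathbf{A})$: smallest $s$ such that the sum of any $s$ columns of $\mathbf{A}$ is component-wise positive ($n+1$ if the sum of all columns is not). Reduced graph w.r.t. $\mathcal{F}$: subgraph of $G$ obtained by removing the nodes of $\mathcal{F}$ with their edges and then up to $f$ additional incoming edges at each remaining node; $R_{\mathcal{F}}$ the set of reduced graphs, $\tau=|R_{\mathcal{F}}|$. Source component: set of nodes each having a directed path to every other node of the graph. Condition 1: for every $\mathcal{F}'\subseteq\mathcal{V}$ with $|\mathcal{F}'|\le f$, every reduced graph w.r.t. $\mathcal{F}'$ has a source component with at least $\max\{f+1,sp(\mathbf{A})\}$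 nodes. Step sizes: $\alpha(t)\ge0$ with $\alpha(t+1)\le\alpha(t)$, $\sum_t\alpha(t)=\infty$, $\sum_t\alpha^2(t)<\infty$. Algorithm 2: arbitrary $x_i(0)$; in iteration $t\ge1$ non-faulty agent $i$ sends $x_i(t-1)$ to all out-neighbors, receives $|N_i^-|$ values (default for missing), discards the $f$ smallest and $f$ largest, lets $N_i^*(t)$ be the senders of the remaining values with values $w_j$, sets $w_i=x_i(t-1)$, and updates $x_i(t)=\frac{1}{|N_i^*(t)|+1}\sum_{j\in\{i\}\cup N_i^*(t)}w_j-\alpha(t-1)d_i(t-1)$, $d_i(t-1)$ a subgradient of $g_i$ at $x_i(t-1)$. Known facts: with $\mathbf{x}(t)$ the non-faulty states and $\mathbf{d}(t)=(d_1(t),\dots,d_{n-\phi}(t))$, $\mathbf{x}(t+1)=\mathbf{M}(t)\mathbf{x}(t)-\alpha(t)\mathbf{d}(t)$ with row-stochastic $\mathbf{M}(t)$, and there is $0<\beta<1$ with $\mathbf{M}(t)\ge\beta\mathbf{H}(t)$ entrywise for the adjacency matrix $\mathbf{H}(t)$ (including diagonal ones) of some reduced graph in $R_{\mathcal{F}}$. Let $\Phi(t,r)=\mathbf{M}(t)\cdots\mathbf{M}(r)$ for $t\ge r$, $\Phi(t,t+1)=I$, $\nu=\tau(n-\phi)$, $\gamma=1-\beta^\nu$. Under Condition 1, for each $r$, $\lim_{t\to\infty}\Phi(t,r)=\mathbf{1}\pi(r)$ for a stochastic row vector $\pi(r)=(\pi_1(r),\dots,\pi_{n-\phi}(r))$,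 and $|\Phi_{ij}(t,r)-\pi_j(r)|\le\gamma^{\lceil (t-r+1)/\nu\rceil}$ for all $t\ge r$. Define $y(t)=\sum_{j=1}^{n-\phi}\pi_j(0)x_j(0)-\sum_{r=1}^{t}\alpha(r-1)\sum_{j=1}^{n-\phi}\pi_j(r)d_j(r-1)$. *)

(* Defs.v *)
From HB Require Import structures.
From mathcomp Require Import all_boot all_order all_algebra.
From mathcomp Require Import all_classical all_reals all_analysis.
Set Implicit Arguments. Unset Strict Implicit. Unset Printing Implicit Defensive.
Import Order.TTheory GRing.Theory Num.Theory.
Import numFieldNormedType.Exports.
Local Open Scope classical_set_scope.
Local Open Scope ring_scope.

Section Defs.
Variable R : realType.

Definition convex_fun (h : R -> R) : Prop :=
  forall (x y l : R), 0 <= l -> l <= 1 ->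
    h (l * x + (1 - l) * y) <= l * h x + (1 - l) * h y.

Definition lipschitz (L : R) (h : R -> R) : Prop :=
  forall x y : R, `|h x - h y| <= L * `|x - y|.

Definition argmin (h : R -> R) : set R := [set x | forall z, h x <= h z].

Definition admissible (L : R) (h : R -> R) : Prop :=
  [/\ convex_fun h, lipschitz L h, argmin h !=set0 & compact (argmin h)].

Definition assignment_matrix (k n : nat) (A : 'M[R]_(k, n)) : Prop :=
  (forall j i, 0 <= A j i) /\ (forall i, \sum_(j < k) A j i = 1).

Definition subgradient (g : R -> R) (x d : R) : Prop :=
  forall z, g x + d * (z - x) <= g z.

Definition row_stochastic (m : nat) (M : 'M[R]_m) : Prop :=
  (forall i j, 0 <= M i j) /\ (forall i, \sum_(j < m) M i j = 1).

Definition stochastic_rowvec (m : nat) (p : 'rV[R]_m) : Prop :=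
  (forall j, 0 <= p 0 j) /\ \sum_(j < m) p 0 j = 1.

Fixpoint phi_aux (m : nat) (M : nat -> 'M[R]_m) (r k : nat) : 'M[R]_m :=
  match k with
  | 0 => 1%:M
  | k'.+1 => M (r + k')%N *m phi_aux M r k'
  end.

(* Phi(t, r) = M(t) ... M(r) for t >= r, and Phi(r-1, r) = I *)
Definition Phi (m : nat) (M : nat -> 'M[R]_m) (t r : nat) : 'M[R]_m :=
  phi_aux M r (t.+1 - r).

End Defs.

Definition ceildiv (a b : nat) : nat := ((a + b.-1) %/ b)%N.

(* Main.v *)
Require Import Defs.
From HB Require Import structures.
From mathcomp Require Import all_boot all_order all_algebra.
From mathcomp Require Import all_classical all_reals all_analysis.
From mathcomp Require Import ring lra zify.
Import Order.TTheory GRing.Theory Num.Theory.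
Import numFieldNormedType.Exports.
Local Open Scope classical_set_scope.
Local Open Scope ring_scope.


Lemma bernoulli_ineq (R : realType) (c : R) (n : nat) :
  0 <= c -> c <= 1 -> 1 - n%:R * c <= (1 - c) ^+ n.
Proof.
move=> c0 c1; elim: n => [|n IH]; first by rewrite expr0 mul0r subr0.
rewrite exprS -natr1.
have h1 : 0 <= 1 - c by lra.
have h2 : (1 - c) * (1 - n%:R * c) <= (1 - c) * (1 - c) ^+ n by rewrite ler_wpM2l.
have h3 : 0 <= n%:R * c * c by rewrite mulr_ge0 // mulr_ge0.
nra.
Qed.

Lemma geom_sum_le (R : realType) (rho : R) (N : nat) :
  0 <= rho -> rho < 1 -> \sum_(0 <= t < N) rho ^+ t <= (1 - rho)^-1.
Proof.
move=> r0 r1.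
have E : (1 - rho) * \sum_(0 <= t < N) rho ^+ t = 1 - rho ^+ N.
  elim: N => [|N IH]; first by rewrite big_geq // mulr0 expr0 subrr.
  by rewrite big_nat_recr //= mulrDr IH exprS; ring.
have p : 0 < 1 - rho by lra.
rewrite -(ler_pM2l p) mulfV ?gt_eqF // E.
have : 0 <= rho ^+ N by rewrite exprn_ge0.
lra.
Qed.

Lemma conv_sum_le (R : realType) (a : nat -> R) (rho : R) (N : nat) :
  (forall t, 0 <= a t) -> 0 <= rho -> rho < 1 ->
  \sum_(0 <= t < N) \sum_(1 <= r < t.+1) a r.-1 * rho ^+ (t - r)
  <= (\sum_(0 <= t < N) a t) / (1 - rho).
Proof.
move=> a0 r0 r1.
set v := fun t => \sum_(1 <= r < t.+1) a r.-1 * rho ^+ (t - r).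
have v0 : forall t, 0 <= v t.
  by move=> t; apply: sumr_ge0 => r _; rewrite mulr_ge0 // exprn_ge0.
have vS : forall t, v t.+1 = rho * v t + a t.
  move=> t; rewrite /v big_nat_recr //= subnn expr0 mulr1; congr (_ + _).
  rewrite mulr_sumr; apply: eq_big_nat => r /andP [r1' rt].
  have -> : (t.+1 - r = (t - r).+1)%N by lia.
  by rewrite exprS; ring.
set W := \sum_(0 <= t < N) v t.
have E : \sum_(0 <= t < N.+1) v t = rho * W + \sum_(0 <= t < N) a t.
  rewrite big_nat_recl //.
  have -> : v 0%N = 0 by rewrite /v big_geq.
  rewrite add0r.
  under eq_bigr do rewrite vS.
  by rewrite big_split /= -mulr_sumr.
have le : W <= \sum_(0 <= t < N.+1) v t by rewrite big_nat_recr //= lerDl.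
have p : 0 < 1 - rho by lra.
rewrite ler_pdivlMr //.
rewrite E in le; nra.
Qed.

Lemma phi_auxS (R : realType) m (M : nat -> 'M[R]_m) r t : (r <= t)%N ->
  phi_aux M r (t.+1 - r) = M t *m phi_aux M r (t - r).
Proof. by move=> rt; rewrite subSn //= subnKC. Qed.

Lemma closed_form (R : realType) m (M : nat -> 'M[R]_m) (alpha : nat -> R)
  (x d : nat -> 'I_m -> R) :
  (forall t, x t.+1 = fun i => \sum_(l < m) M t i l * x t l - alpha t * d t i) ->
  forall t i, x t i = \sum_(l < m) phi_aux M 0 t i l * x 0%N l
    - \sum_(1 <= r < t.+1) alpha r.-1 * \sum_(l < m) phi_aux M r (t - r) i l * d r.-1 l.
Proof.
move=> Hx; elim=> [|t IH] i.
  rewrite big_geq // subr0.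
  under eq_bigr do rewrite /= mxE.
  rewrite (bigD1 i) //= eqxx mulr1n mul1r big1 ?addr0 // => l /negPf.
  by rewrite eq_sym => ->; rewrite mulr0n mul0r.
rewrite Hx.
under eq_bigr do rewrite IH mulrBr.
rewrite sumrB big_nat_recr //= subnn.
have -> : \sum_(l < m) phi_aux M t.+1 0 i l * d t l = d t i.
  rewrite /= (bigD1 i) //= mxE eqxx mulr1n mul1r big1 ?addr0 // => l /negPf.
  by rewrite mxE eq_sym => ->; rewrite mulr0n mul0r.
rewrite opprD addrA; congr (_ - _ - _).
- under eq_bigr do rewrite mulr_sumr.
  rewrite exchange_big /=; apply: eq_bigr => l _.
  rewrite add0n mxE mulr_suml.
  by apply: eq_bigr => j _; rewrite mulrA.
- under eq_bigr do rewrite mulr_sumr.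
  rewrite exchange_big /=; apply: eq_big_nat => r /andP [r1 rt].
  rewrite phi_auxS; last by lia.
  under eq_bigr do rewrite mulrCA.
  rewrite -mulr_sumr; congr (_ * _).
  rewrite (eq_bigr (fun i0 => \sum_(l < m) M t i i0 * (phi_aux M r (t - r) i0 l * d r.-1 l))); last first.
    by move=> i0 _; rewrite mulr_sumr.
  rewrite exchange_big /=; apply: eq_bigr => l _.
  rewrite mxE mulr_suml; apply: eq_bigr => j _; ring.
Qed.

Lemma ceildiv_ge a b : (0 < b)%N -> (a <= b * ceildiv a b)%N.
Proof.
move=> b0; rewrite /ceildiv.
have := divn_eq (a + b.-1) b; have := ltn_pmod (a + b.-1) b0.
move: ((a + b.-1) %/ b)%N ((a + b.-1) %% b)%N => q s; lia.
Qed.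

Lemma stoch_bounds (R : realType) m (p : 'rV[R]_m) j :
  stochastic_rowvec p -> 0 <= p 0 j <= 1.
Proof.
move=> [p0 p1]; rewrite p0 /= -p1 (bigD1 j) //= lerDl.
by apply: sumr_ge0 => i _; apply: p0.
Qed.

Lemma subgrad_bound (R : realType) (g : R -> R) (L x dd : R) :
  (forall a b, `|g a - g b| <= L * `|a - b|) -> subgradient g x dd -> `|dd| <= L.
Proof.
move=> Lg sg.
have h1 := sg (x + 1); have h2 := sg (x - 1).
have l1 := Lg (x + 1) x; have l2 := Lg (x - 1) x.
rewrite addrAC subrr add0r normr1 mulr1 in l1.
rewrite addrAC subrr add0r normrN normr1 mulr1 in l2.
rewrite addrAC subrr add0r mulr1 in h1.
rewrite addrAC subrr add0r mulrN1 in h2.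
have a1 := ler_norm (g (x + 1) - g x).
have a2 := ler_norm (g (x - 1) - g x).
case: (lerP 0 dd) => hd; [rewrite ger0_norm // | rewrite ltr0_norm //]; lra.
Qed.

Lemma lips_comb (R : realType) k n (A : 'M[R]_(k, n)) (h : 'I_k -> R -> R) L i :
  assignment_matrix A -> (forall j, Defs.lipschitz L (h j)) ->
  forall a b, `|(fun z => \sum_(j < k) A j i * h j z) a
              - (fun z => \sum_(j < k) A j i * h j z) b| <= L * `|a - b|.
Proof.
move=> [A0 A1] hl a b /=.
rewrite -sumrB.
apply: le_trans (ler_norm_sum _ _ _) _.
rewrite -(mul1r (L * _)) -(A1 i) mulr_suml.
apply: ler_sum => j _.
rewrite -mulrBr normrM ger0_norm //.
by apply: ler_wpM2l => //; apply: hl.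
Qed.

Lemma err_bound (R : realType) m (M : nat -> 'M[R]_m) (pi : nat -> 'rV[R]_m)
  (beta rho : R) (tau : nat) :
  (forall r, stochastic_rowvec (pi r)) -> 0 <= rho <= 1 ->
  0 <= 1 - beta ^+ (tau * m) <= rho ^+ (tau * m) -> (0 < tau * m)%N ->
  (forall t r i j, (r <= t)%N ->
     `|Phi M t r i j - pi r 0 j|
       <= (1 - beta ^+ (tau * m)) ^+ ceildiv (t - r).+1 (tau * m)) ->
  forall t r j l, (r <= t)%N ->
    `|pi r 0 l - phi_aux M r (t - r) j l| <= rho ^+ (t - r).
Proof.
move=> st /andP [r0 r1] /andP [g0 g1] nu0 Hb t r j l.
rewrite leq_eqVlt => /orP [/eqP <-|].
  rewrite subnn expr0 /= mxE.
  have := @stoch_bounds _ _ _ l (st r).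
  case: (j == l); rewrite /= ?mulr1n ?mulr0n => /andP [a b].
    by rewrite ler0_norm ?subr_le0 // opprB lerBlDr lerDl.
  by rewrite subr0 ger0_norm.
case: t => // t rt.
have := Hb t r j l rt; rewrite /Phi distrC => h.
apply: le_trans h _.
set c := ceildiv _ _.
apply: le_trans (_ : (rho ^+ (tau * m)) ^+ c <= _).
  by apply: lerXn2r => //; rewrite ?nnegrE // exprn_ge0.
rewrite -exprM; apply: ler_wiXn2l => //.
have := @ceildiv_ge (t - r).+1 _ nu0; rewrite -/c; lia.
Qed.

Theorem lemma8 (R : realType) (n f phi k : nat) (L : R)
  (A : 'M[R]_(k, n)) (h : 'I_k -> R -> R)
  (alpha : nat -> R)
  (x : nat -> 'I_(n - phi) -> R) (d : nat -> 'I_(n - phi) -> R)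
  (M : nat -> 'M[R]_(n - phi)) (H : nat -> 'M[R]_(n - phi))
  (pi : nat -> 'rV[R]_(n - phi))
  (beta : R) (tau : nat) :
  (phi <= f)%N ->
  assignment_matrix A ->
  (forall j, admissible L (h j)) ->
  (* step sizes *)
  (forall t, 0 <= alpha t) ->
  (forall t, alpha t.+1 <= alpha t) ->
  series alpha @ \oo --> +oo ->
  cvgn (series (fun t => alpha t ^+ 2)) ->
  (* non-faulty agent i (= agent i of 1..n-phi) holds g_i = sum_j A_ji h_j,
     d_i(t) is a subgradient of g_i at x_i(t) *)
  (forall t (i : 'I_(n - phi)),
     subgradient (fun z => \sum_(j < k) A j (widen_ord (leq_subr phi n) i) * h j z)
                 (x t i) (d t i)) ->
  (* known facts (consequences of Algorithm 2 and Condition 1) *)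
  (forall t, row_stochastic (M t)) ->
  (forall t, x t.+1 = fun i => \sum_(l < n - phi) M t i l * x t l - alpha t * d t i) ->
  (0 < beta < 1) -> (0 < tau)%N ->
  (forall t i j, H t i j = 0 \/ H t i j = 1) ->
  (forall t i, H t i i = 1) ->
  (forall t i j, beta * H t i j <= M t i j) ->
  (forall r, stochastic_rowvec (pi r)) ->
  (forall r i j, (fun t => Phi M t r i j) @ \oo --> pi r 0 j) ->
  (forall t r i j, (r <= t)%N ->
     `|Phi M t r i j - pi r 0 j|
       <= (1 - beta ^+ (tau * (n - phi))) ^+ ceildiv (t - r).+1 (tau * (n - phi))) ->
  let y := fun t : nat =>
    \sum_(j < n - phi) pi 0%N 0 j * x 0%N j
    - \sum_(1 <= r < t.+1) alpha r.-1 * \sum_(j < n - phi) pi r 0 j * d r.-1 j in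
  cvgn (series (fun t =>
    alpha t * \sum_(j < n - phi) pi t.+1 0 j * `|y t - x t j|)).
Proof.
move=> _ HA Hh a0 aS _ a2cv Hsg HM Hx /andP [b0 b1] tau0 _ _ _ Hpi _ Hb y.
set m := (n - phi)%N.
set u := fun t => alpha t * \sum_(j < m) pi t.+1 0 j * `|y t - x t j|.
have u0 : forall t, 0 <= u t.
  move=> t; rewrite mulr_ge0 //; apply: sumr_ge0 => j _.
  by rewrite mulr_ge0 // (andP (@stoch_bounds _ _ _ j (Hpi _))).1.
suff [B HB] : exists B, forall N, series u N <= B.
  apply: nondecreasing_is_cvgn.
    move=> p q pq; rewrite /series /=.
    exact: (nondecreasing_series (fun k _ _ => u0 k)).
  by exists B => _ [N _ <-].
case: (posnP (n - phi)) => [m0|mpos].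
  exists 0 => N; rewrite /series /= big1 // => t _.
  rewrite /u big1 ?mulr0 // => j _.
  exfalso; have := ltn_ord j; lia.
have Ld : forall t i, `|d t i| <= L.
  move=> t i; apply: (subgrad_bound _ _ _ _ _ _ (Hsg t i)).
  apply: lips_comb => // j; by case: (Hh j).
have L0 : 0 <= L by apply: le_trans (Ld 0%N (Ordinal mpos)).
set nu := (tau * (n - phi))%N.
have nu0 : (0 < nu)%N by rewrite muln_gt0 tau0.
set c := beta ^+ nu.
have c0 : 0 < c by rewrite exprn_gt0.
have c1 : c < 1 by rewrite exprn_ilt1 ?ltW // -lt0n.
have nuR : 1 <= (nu%:R : R) by rewrite ler1n.
set rho := 1 - c / nu%:R.
have cnu : c / nu%:R <= 1 by rewrite ler_pdivrMr ?mul1r; nra.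
have cnu0 : 0 < c / nu%:R by rewrite divr_gt0 //; lra.
have rho0 : 0 <= rho by rewrite /rho subr_ge0.
have rho1 : rho < 1 by rewrite /rho; lra.
have rhonu : 1 - c <= rho ^+ nu.
  have := bernoulli_ineq _ (c / nu%:R) nu (ltW cnu0) cnu.
  by rewrite mulrCA mulfV ?mulr1 // gt_eqF //; lra.
have Eb : forall t r j l, (r <= t)%N ->
    `|pi r 0 l - phi_aux M r (t - r) j l| <= rho ^+ (t - r).
  apply: (err_bound _ _ M pi beta rho tau Hpi) => //.
  - by rewrite rho0 ltW.
  - by rewrite rhonu subr_ge0 ltW.
have CF := closed_form _ _ M alpha x d Hx.
set K := ((n - phi)%:R * L).
have K0 : 0 <= K by rewrite mulr_ge0.
set X0 := \sum_(l < n - phi) `|x 0%N l|.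
have X00 : 0 <= X0 by apply: sumr_ge0 => l _.
have KB : forall t j, `|y t - x t j| <= rho ^+ t * X0
    + \sum_(1 <= r < t.+1) alpha r.-1 * (K * rho ^+ (t - r)).
  move=> t j; rewrite /y (CF t j).
  set S1 := \sum_(l < _) pi 0%N 0 l * x 0%N l.
  set T1 := \sum_(1 <= r < t.+1) alpha r.-1 * \sum_(l < _) pi r 0 l * d r.-1 l.
  set S2 := \sum_(l < _) phi_aux M 0 t j l * x 0%N l.
  set T2 := \sum_(1 <= r < t.+1) alpha r.-1 * \sum_(l < _) phi_aux M r (t - r) j l * d r.-1 l.
  have -> : S1 - T1 - (S2 - T2) = (S1 - S2) - (T1 - T2) by ring.
  apply: le_trans (ler_normB _ _) _; apply: lerD.
    rewrite /S1 /S2 -sumrB; apply: le_trans (ler_norm_sum _ _ _) _.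
    rewrite /X0 mulr_sumr; apply: ler_sum => l _.
    rewrite -mulrBl normrM; apply: ler_wpM2r => //.
    by have := Eb t 0%N j l (leq0n t); rewrite subn0.
  rewrite /T1 /T2 -sumrB; apply: le_trans (ler_norm_sum _ _ _) _.
  apply: ler_sum_nat => r /andP [r1 rt].
  rewrite -mulrBr normrM (ger0_norm (a0 _)); apply: ler_wpM2l => //.
  rewrite -sumrB; apply: le_trans (ler_norm_sum _ _ _) _.
  apply: le_trans (_ : _ <= \sum_(l < n - phi) (rho ^+ (t - r) * L)) _.
    apply: ler_sum => l _; rewrite -mulrBl normrM.
    by apply: ler_pM => //; apply: Eb; rewrite -ltnS.
  rewrite sumr_const card_ord -mulr_natl le_eqVlt; apply/orP; left; apply/eqP.
  by rewrite /K; ring.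
have anti : forall s t, (s <= t)%N -> alpha t <= alpha s.
  move=> s t /subnK <-; elim: (t - s)%N => [|p IH]; first by rewrite add0n.
  by rewrite addSn; apply: le_trans (aS _) IH.
have UB : forall t, u t <= alpha 0%N * X0 * rho ^+ t
    + K * \sum_(1 <= r < t.+1) alpha r.-1 ^+ 2 * rho ^+ (t - r).
  move=> t; rewrite /u.
  apply: le_trans (_ : _ <= alpha t * (rho ^+ t * X0
    + \sum_(1 <= r < t.+1) alpha r.-1 * (K * rho ^+ (t - r)))) _.
    apply: ler_wpM2l => //.
    apply: le_trans (_ : _ <= \sum_(j < n - phi) pi t.+1 0 j * (rho ^+ t * X0
      + \sum_(1 <= r < t.+1) alpha r.-1 * (K * rho ^+ (t - r)))) _.
      apply: ler_sum => j _; apply: ler_wpM2l => //.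
      by have [] := Hpi t.+1.
    by rewrite -mulr_suml (Hpi t.+1).2 mul1r.
  rewrite mulrDr; apply: lerD.
    have : 0 <= rho ^+ t * X0 by rewrite mulr_ge0 // exprn_ge0.
    have := anti 0%N t (leq0n t); nra.
  rewrite mulr_sumr mulr_sumr; apply: ler_sum_nat => r /andP [r1 rt].
  have ar : alpha t <= alpha r.-1 by apply: anti; lia.
  have p0 : 0 <= alpha r.-1 * (K * rho ^+ (t - r)).
    by rewrite mulr_ge0 // mulr_ge0 // exprn_ge0.
  apply: le_trans (_ : _ <= alpha r.-1 * (alpha r.-1 * (K * rho ^+ (t - r)))) _.
    exact: ler_wpM2r.
  by rewrite le_eqVlt; apply/orP; left; apply/eqP; ring.
set S2 := limn (series (fun t => alpha t ^+ 2)).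
exists (alpha 0%N * X0 / (1 - rho) + K * (S2 / (1 - rho))) => N.
rewrite /series /=.
apply: le_trans (ler_sum_nat (fun t _ => UB t)) _.
rewrite big_split /= -mulr_sumr -mulr_sumr; apply: lerD.
  apply: ler_wpM2l; first by rewrite mulr_ge0.
  exact: geom_sum_le.
apply: ler_wpM2l => //.
apply: le_trans (conv_sum_le _ _ _ _ (fun t => sqr_ge0 (alpha t)) rho0 rho1) _.
apply: ler_wpM2r; first by rewrite invr_ge0; lra.
have := nondecreasing_cvgn_le _ a2cv N.
rewrite /series /=; apply.
move=> p q pq; exact: (nondecreasing_series (fun k _ _ => sqr_ge0 (alpha k))).
Qed.
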